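(* Let $0<a<1$ and $r>0$. For $0\leq t\leq 1$ set $\Delta_t=\{(z,w)\in\mathbb{C}^2:|z|<(1+t)r,\ |w|<(1+2t)r\}$ and \[ F_t(z,w)=\big((1-t)z^2+(a+rt)w,\ az\big),\qquad \Omega_t=F_t(\Delta_t). \] Then: (i) $\Omega_t\subset\subset\Omega_s$ whenever $0\leq t<s\leq1$; (ii) $\Omega_t=\bigcup_{0\leq t'<t}\Omega_{t'}$ for every $0<t\leq 1$; (iii) $\overline{\Omega_t}=\bigcap_{t<s\leq1}\Omega_s$ for every $0\leq t<1$. *)

(* Defs.v *)
(* Complex numbers are mathcomp-real-closed's
   [R[i]] (= complex R) over an abstract [R : realType]; the Euclidean
   topology on C is the one mathcomp-analysis puts on the regular
   numField [R[i]^o], and C^2 carries the product topology. *)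
From HB Require Import structures.
From mathcomp Require Import all_boot all_order all_algebra.
From mathcomp Require Import all_classical all_reals all_analysis.
From mathcomp Require Import complex.
Import Order.TTheory GRing.Theory Num.Theory.
Import numFieldTopology.Exports numFieldNormedType.Exports.
Local Open Scope classical_set_scope.
Local Open Scope ring_scope.
Local Open Scope complex_scope.

Set Implicit Arguments.
Unset Strict Implicit.
Unset Printing Implicit Defensive.

Notation Cplx R := ((complex R)^o).

Definition compactly_contained (T : topologicalType) (A B : set T) : Prop :=
  compact (closure A) /\ closure A `<=` B.

Definition Delta (R : realType) (r t : R) : set (Cplx R * Cplx R) :=
  [set p | `|(p.1 : R[i])| < ((1 + t) * r)%:C /\ `|(p.2 : R[i])| < ((1 + 2 * t) * r)%:C].

Definition Fmap (R : realType) (a r t : R) (p : Cplx R * Cplx R) : Cplx R * Cplx R :=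
  (((1 - t)%:C * (p.1 : R[i]) ^+ 2 + (a + r * t)%:C * (p.2 : R[i]) : R[i]) : Cplx R,
   ((a%:C * (p.1 : R[i])) : R[i]) : Cplx R).

Definition Omega (R : realType) (a r t : R) : set (Cplx R * Cplx R) :=
  Fmap a r t @` Delta r t.

(* Main.v *)
Require Import Defs.
From HB Require Import structures.
From mathcomp Require Import all_boot all_order all_algebra.
From mathcomp Require Import all_classical all_reals all_analysis.
From mathcomp Require Import complex.
From mathcomp Require Import ring lra.
Import Order.TTheory GRing.Theory Num.Theory.
Import numFieldTopology.Exports numFieldNormedType.Exports.
Local Open Scope classical_set_scope.
Local Open Scope ring_scope.
Local Open Scope complex_scope.
Set Implicit Arguments.
Unset Strict Implicit.
Unset Printing Implicit Defensive.
Section NC.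
Variable R : realType.
Definition nC (z : R[i]) : R := Num.sqrt (complex.Re z ^+ 2 + complex.Im z ^+ 2).
Lemma normE (z : R[i]) : `|z| = (nC z)%:C. Proof. exact: normc_def. Qed.
Lemma nC_ge0 z : 0 <= nC z. Proof. exact: sqrtr_ge0. Qed.
Lemma nCM x y : nC (x * y) = nC x * nC y.
Proof. apply: (@complexI R); by rewrite rmorphM /= -!normE normrM. Qed.
Lemma nCD x y : nC (x + y) <= nC x + nC y.
Proof. by rewrite -lecR rmorphD /= -!normE ler_normD. Qed.
Lemma nCB x y : nC (x - y) = nC (y - x).
Proof. apply: (@complexI R); by rewrite -!normE distrC. Qed.
Lemma nCN x : nC (- x) = nC x.
Proof. apply: (@complexI R); by rewrite -!normE normrN. Qed.
Lemma nCR (x : R) : nC (x%:C) = `|x|.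
Proof. by rewrite /nC /= expr0n /= addr0 sqrtr_sqr. Qed.
Lemma nCX x : nC (x ^+ 2) = nC x ^+ 2. Proof. by rewrite !expr2 nCM. Qed.
Lemma ltC z c : (`|z| < c%:C) = (nC z < c). Proof. by rewrite normE ltcR. Qed.
Lemma ReC (z : R[i]) : `|complex.Re z| <= nC z.
Proof. rewrite -sqrtr_sqr /nC; apply: ler_wsqrtr; by rewrite lerDl sqr_ge0. Qed.
Lemma ImC (z : R[i]) : `|complex.Im z| <= nC z.
Proof. rewrite -sqrtr_sqr /nC; apply: ler_wsqrtr; by rewrite lerDr sqr_ge0. Qed.
Lemma nCi : nC 'i = 1. Proof. by rewrite /nC /= expr0n expr1n add0r sqrtr1. Qed.
Lemma nC_pair (x y : R) : nC (x +i* y) <= `|x| + `|y|.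
Proof.
have -> : x +i* y = x%:C + 'i * y%:C by rewrite [LHS]complexE.
by apply: le_trans (nCD _ _) _; rewrite nCM nCi mul1r !nCR.
Qed.

Lemma exdelta (t G H X Y : R) : 0 < t -> 0 < G -> 0 < H -> 0 <= X -> 0 <= Y ->
  exists d, [/\ 0 < d, d <= t, d * X < G & d * Y < H].
Proof.
move=> t0 G0 H0 X0 Y0.
set u := G / (X + 1). set v := H / (Y + 1).
have u0 : 0 < u by rewrite divr_gt0 // ltr_wpDl.
have v0 : 0 < v by rewrite divr_gt0 // ltr_wpDl.
have uE : u * (X + 1) = G by rewrite /u mulfVK // gt_eqF // ltr_wpDl.
have vE : v * (Y + 1) = H by rewrite /v mulfVK // gt_eqF // ltr_wpDl.
exists (Num.min t (Num.min u v)).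
have h1 : Num.min t (Num.min u v) <= t by rewrite ge_min lexx.
have h2 : Num.min t (Num.min u v) <= u by rewrite !ge_min lexx orbT.
have h3 : Num.min t (Num.min u v) <= v by rewrite !ge_min lexx !orbT.
have h0 : 0 < Num.min t (Num.min u v) by rewrite !lt_min t0 u0 v0.
split => //; nra.
Qed.

Lemma lim_le (d X Y K : R) : 0 < d -> 0 <= K ->
  (forall e, 0 < e -> e <= d -> X <= Y + e * K) -> X <= Y.
Proof.
move=> d0 K0 H; rewrite leNgt; apply/negP => hlt.
have XY : 0 < X - Y by rewrite subr_gt0.
have [e [e0 ed eK _]] := @exdelta d (X - Y) 1 K 0 d0 XY ltr01 K0 (lexx 0).
have := H e e0 ed; lra.
Qed.
End NC.

Lemma R3 (R : realType) (a r t t' x y : R) : 0 < a -> 0 < r -> 0 <= t' -> t' < t -> t <= 1 ->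
  0 <= x -> x <= (1 + t') * r -> 0 <= y -> y <= (1 + 2 * t') * r ->
  (t - t') * x ^+ 2 + (a + r * t') * y < (1 + 2 * t) * r * (a + r * t).
Proof.
move=> ha hr h0 htt ht1 x0 hx y0 hy.
have e1 : (t - t') * x ^+ 2 <= (t - t') * ((1 + t') * r) ^+ 2.
  have : x ^+ 2 <= ((1 + t') * r) ^+ 2 by nra.
  nra.
have e2 : (a + r * t') * y <= (a + r * t') * ((1 + 2 * t') * r).
  have : 0 <= a + r * t' by nra.
  nra.
suff : (t - t') * ((1 + t') * r) ^+ 2 + (a + r * t') * ((1 + 2 * t') * r) < (1 + 2 * t) * r * (a + r * t) by lra.
have d0 : 0 < t - t' by lra.
have : t' ^+ 2 <= t' by nra.
have : 0 < (t - t') * r * (2 * a + r * (1 + 2 * t + 2 * t') - r * (1 + t') ^+ 2).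
  apply: mulr_gt0; first by apply: mulr_gt0.
  nra.
nra.
Qed.

Lemma Rpos (R : realType) (a r t : R) : 0 < a -> 0 < r -> 0 <= t -> 0 < a + r * t.
Proof. move=> *; nra. Qed.
Lemma RltA (R : realType) (r t t' x : R) : 0 < r -> t' < t -> x <= (1 + t') * r -> x < (1 + t) * r.
Proof. move=> *; nra. Qed.


Lemma Rl (R : realType) (d x A : R) : 0 < d -> 0 <= x -> x <= A -> 0 < A -> (1 - d) * x < A.
Proof. move=> *; nra. Qed.

Lemma R4 (R : realType) (t d x y c a : R) : 0 <= t -> t <= 1 -> 0 < d -> d <= 1/2 ->
  0 <= x -> 0 <= y -> 0 <= c -> 0 <= a ->
  (1 - t) * (1 - (1 - d) ^+ 2) * x ^+ 2 + c * d * y <= d * (2 * x ^+ 2 + c * y + a * x).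
Proof.
move=> t0 t1 d0 d1 x0 y0 c0 a0.
have hu : 0 <= 1 - (1 - d) ^+ 2 <= 2 * d by apply/andP; split; nra.
set u := 1 - (1 - d) ^+ 2 in hu *.
have h1 : (1 - t) * u <= 2 * d by nra.
have hx : 0 <= x ^+ 2 by nra.
have : (1 - t) * u * x ^+ 2 <= 2 * d * x ^+ 2 by apply: ler_wpM2r.
have : 0 <= a * x * d by rewrite !mulr_ge0 // ltW.
lra.
Qed.

Lemma R4p (R : realType) (t d : R) : 0 <= t -> t <= 1 -> 0 < d -> d <= 1/2 ->
  0 <= (1 - t) * (1 - (1 - d) ^+ 2).
Proof.
move=> t0 t1 d0 d1; have : 0 <= 1 - (1 - d) ^+ 2 by nra.
by move=> h; rewrite mulr_ge0 // subr_ge0.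
Qed.


Lemma R5 (R : realType) (t e nw B n1 nz A m c a : R) : 0 <= t -> t <= 1 -> 0 < e -> e <= 1 ->
  nw <= B -> n1 <= a * e -> 0 <= nz -> nz <= A -> 0 <= m -> m <= e -> 0 <= c ->
  c * nw + n1 + (1 - t) * (2 * nz * m + m ^+ 2) <= c * B + e * (a + 2 * A + 1).
Proof.
move=> t0 t1 e0 e1 hw h1 z0 zA m0 me c0.
have h2 : 0 <= 2 * nz * m + m ^+ 2 by rewrite addr_ge0 ?exprn_ge0 // !mulr_ge0.
have h3 : (1 - t) * (2 * nz * m + m ^+ 2) <= 2 * nz * m + m ^+ 2.
  by rewrite ler_piMl // lerBlDr lerDl.
have h4 : nz * m <= A * e by rewrite ler_pM.
have h5 : m ^+ 2 <= e by rewrite expr2; apply: le_trans (ler_pM _ _ me me) _ => //; rewrite -[leRHS]mul1r ler_wpM2r // ltW.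
have h6 : c * nw <= c * B by rewrite ler_wpM2l.
lra.
Qed.


Lemma R6 (R : realType) (a r t e nz nw : R) : 0 < a -> 0 < r -> 0 <= t -> 0 < e -> t + e <= 1 ->
  0 <= nz -> nz <= (1 + (t + e)) * r -> 0 <= nw -> nw <= (1 + 2 * (t + e)) * r ->
  (a + r * (t + e)) * nw + e * nz ^+ 2 <=
  (a + r * t) * ((1 + 2 * t) * r) + e * (r * (2 * a + 5 * r) + 4 * r ^+ 2).
Proof.
move=> a0 r0 t0 e0 te z0 hz w0 hw.
have te0 : 0 <= t + e by lra.
have c0 : 0 <= a + r * (t + e) by apply: addr_ge0; [exact: ltW | apply: mulr_ge0 => //; exact: ltW].
have h1 : (a + r * (t + e)) * nw <= (a + r * (t + e)) * ((1 + 2 * (t + e)) * r) by rewrite ler_wpM2l.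
have hz2 : nz ^+ 2 <= 4 * r ^+ 2.
  have : nz <= 2 * r by apply: le_trans hz _; apply: ler_wpM2r; [exact: ltW | lra].
  move=> h; rewrite (_ : 4 * r ^+ 2 = (2 * r) ^+ 2); last by rewrite exprMn; congr (_ * _); rewrite expr2 -natrM.
  by rewrite lerXn2r // nnegrE // mulr_ge0 // ltW.
have h2 : e * nz ^+ 2 <= e * (4 * r ^+ 2) by rewrite ler_wpM2l // ltW.
have h3 : (a + r * (t + e)) * ((1 + 2 * (t + e)) * r) =
   (a + r * t) * ((1 + 2 * t) * r) + e * r * (2 * a + r * (1 + 2 * t + 2 * (t + e))) by ring.
have h4 : e * r * (2 * a + r * (1 + 2 * t + 2 * (t + e))) <= e * r * (2 * a + 5 * r).
  apply: ler_wpM2l; first by rewrite mulr_ge0 // ltW.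
  rewrite lerD2l [5 * r]mulrC; apply: ler_wpM2l; [exact: ltW | lra].
lra.
Qed.

Lemma R7 (R : realType) (a r t d al be : R) : 0 < a -> 0 < r -> 0 < d -> d <= t -> 0 <= be ->
  d * (al ^+ 2 + r * (2 * (a + r * t) + r * (1 + 2 * t))) < (a + r * t) * ((1 + 2 * t) * r - be) ->
  (a + r * t) * be + d * al ^+ 2 < (1 + 2 * (t - d)) * r * (a + r * (t - d)).
Proof.
move=> a0 r0 d0 dt b0 h.
have e : (1 + 2 * (t - d)) * r * (a + r * (t - d)) =
  (1 + 2 * t) * r * (a + r * t) - d * r * (2 * (a + r * t) + r * (1 + 2 * t)) + 2 * (d * r) ^+ 2 by ring.
have : 0 <= (d * r) ^+ 2 by rewrite exprn_ge0 // mulr_ge0 // ltW.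
lra.
Qed.

Section Main.
Variables (R : realType) (a r : R).
Hypotheses (a0 : 0 < a) (a1 : a < 1) (r0 : 0 < r).

Lemma FmapE t (z w : R[i]) : Fmap a r t (z, w) =
  (((1 - t)%:C * z ^+ 2 + (a + r * t)%:C * w : R[i]) : Cplx R, (a%:C * z : R[i]) : Cplx R).
Proof. by []. Qed.

Lemma DeltaE t (z w : R[i]) : Delta r t (z, w) <-> (nC z < (1 + t) * r /\ nC w < (1 + 2 * t) * r).
Proof. by rewrite /Delta /= !ltC. Qed.

Lemma nC_div (N : R[i]) (c : R) : 0 < c -> nC (N / c%:C) = nC N / c.
Proof. move=> c0; by rewrite nCM -fmorphV nCR ger0_norm // invr_ge0 ltW. Qed.

Lemma OmegaA (t t' : R) (z w : R[i]) : 0 <= t' -> t' < t -> t <= 1 ->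
  nC z <= (1 + t') * r -> nC w <= (1 + 2 * t') * r -> Omega a r t (Fmap a r t' (z, w)).
Proof.
move=> t'0 tt' t1 hz hw.
have c0 : 0 < a + r * t by apply: Rpos => //; apply: le_trans t'0 (ltW tt').
have c'0 : 0 < a + r * t' by apply: Rpos.
pose N := (t - t')%:C * z ^+ 2 + (a + r * t')%:C * w.
exists (z, N / (a + r * t)%:C).
  apply/DeltaE; split; first exact: RltA hz.
  rewrite nC_div // ltr_pdivrMr //.
  have hN : nC N <= (t - t') * nC z ^+ 2 + (a + r * t') * nC w.
    apply: le_trans (nCD _ _) _.
    by rewrite !nCM !nCR -expr2 !ger0_norm ?subr_ge0 ?(ltW tt') ?(ltW c'0).
  have hz0 := nC_ge0 z; have hw0 := nC_ge0 w.
  apply: (le_lt_trans hN).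
  exact: R3.
rewrite !FmapE /N; congr pair; rewrite /=.
have cne : (a + r * t)%:C != 0 :> R[i] by apply/eqP => /(congr1 (@complex.Re R)) /= h; move: c0; rewrite h ltxx.
by field; move: cne; rewrite rmorphD rmorphM.
Qed.

Lemma nCRp (x : R) : 0 <= x -> nC x%:C = x.
Proof. by move=> x0; rewrite nCR ger0_norm. Qed.

Lemma nCBD (x y : R[i]) : nC (x - y) <= nC x + nC y.
Proof. by apply: le_trans (nCD _ _) _; rewrite nCN. Qed.

Lemma ballC2 (p q : Cplx R * Cplx R) (e : R[i]) :
  ball p e q <-> (`|(p.1 : R[i]) - q.1| < e /\ `|(p.2 : R[i]) - q.2| < e).
Proof. by rewrite /ball /= /prod_ball -!ball_normE. Qed.

Lemma nbhsC2 (p : Cplx R * Cplx R) (B : set (Cplx R * Cplx R)) : nbhs p B ->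
  exists2 e : R, 0 < e & forall q : Cplx R * Cplx R,
    nC ((p.1 : R[i]) - q.1) < e -> nC ((p.2 : R[i]) - q.2) < e -> B q.
Proof.
move=> /nbhs_ballP [[er ei]] /= e0 hB.
move: e0; rewrite ltcE /= => /andP [/eqP ei0 er0]; subst ei.
exists er => // q h1 h2; apply: hB; apply/ballC2.
by rewrite !ltC.
Qed.

Lemma nbhsC2' (p : Cplx R * Cplx R) (e : R) : 0 < e ->
  nbhs p [set q : Cplx R * Cplx R | nC ((p.1 : R[i]) - q.1) < e /\ nC ((p.2 : R[i]) - q.2) < e].
Proof.
move=> e0; apply/nbhs_ballP; exists (e%:C); first by rewrite /= ltcE /= eqxx e0.
by move=> q /ballC2; rewrite !ltC.
Qed.

Lemma closD t z w : 0 <= t -> t <= 1 -> nC z <= (1 + t) * r -> nC w <= (1 + 2 * t) * r ->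
  closure (Omega a r t) (Fmap a r t (z, w)).
Proof.
move=> t0 t1 hz hw B /nbhsC2 [e e0 hB].
have c0 : 0 < a + r * t by apply: Rpos.
have hz0 := nC_ge0 z; have hw0 := nC_ge0 w.
set X := 2 * nC z ^+ 2 + (a + r * t) * nC w + a * nC z.
have X0 : 0 <= X.
  by rewrite /X !addr_ge0 ?mulr_ge0 ?exprn_ge0 ?(ltW c0) ?(ltW a0).
have h12 : (0:R) < 1/2 by rewrite divr_gt0.
have [d [d0 d1 dX _]] := @exdelta _ (1/2) e 1 X 0 h12 e0 ltr01 X0 (lexx 0).
have l0 : 0 <= 1 - d by rewrite subr_ge0; apply: le_trans d1 _; rewrite ler_pdivrMr // mul1r ler1n.
have A0 : 0 < (1 + t) * r by rewrite mulr_gt0 // ltr_wpDr.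
have B0 : 0 < (1 + 2 * t) * r by rewrite mulr_gt0 // ltr_wpDr // mulr_ge0.
exists (Fmap a r t ((1 - d)%:C * z, (1 - d)%:C * w)); split.
  exists ((1 - d)%:C * z, (1 - d)%:C * w) => //.
  apply/DeltaE; rewrite !nCM !nCRp //; split; exact: Rl.
apply: hB; rewrite /=.
  have -> : (1 - t)%:C * z ^+ 2 + (a + r * t)%:C * w -
     ((1 - t)%:C * ((1 - d)%:C * z) ^+ 2 + (a + r * t)%:C * ((1 - d)%:C * w)) =
     ((1 - t) * (1 - (1 - d) ^+ 2))%:C * z ^+ 2 + ((a + r * t) * d)%:C * w :> R[i].
    by rewrite !rmorphM !rmorphB rmorphXn /=; ring.
  apply: le_lt_trans (nCD _ _) _.
  rewrite !nCM !nCRp ?R4p ?mulr_ge0 ?(ltW c0) ?(ltW d0) // -expr2.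
  apply: le_lt_trans dX; rewrite /X; apply: R4 => //; exact: ltW.
have -> : a%:C * z - a%:C * ((1 - d)%:C * z) = (a * d)%:C * z :> R[i].
  by rewrite !rmorphM !rmorphB /=; ring.
rewrite nCM nCRp ?mulr_ge0 ?(ltW a0) ?(ltW d0) //.
apply: le_lt_trans dX.
rewrite mulrAC mulrC; apply: ler_wpM2l; first exact: ltW.
by rewrite /X lerDr; apply: addr_ge0; rewrite ?mulr_ge0 ?exprn_ge0 ?(ltW c0).
Qed.

Definition Lset t (p : Cplx R * Cplx R) :=
  nC (p.2 : R[i]) <= a * ((1 + t) * r) /\
  nC ((p.1 : R[i]) - (1 - t)%:C * ((p.2 : R[i]) / a%:C) ^+ 2) <= (a + r * t) * ((1 + 2 * t) * r).

Lemma aC0 : a%:C != 0 :> R[i].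
Proof. by apply/eqP => /(congr1 (@complex.Re R)) /= h; move: a0; rewrite h ltxx. Qed.

Lemma cC0 t : 0 <= t -> (a + r * t)%:C != 0 :> R[i].
Proof.
move=> t0; have c0 : 0 < a + r * t by apply: Rpos.
by apply/eqP => /(congr1 (@complex.Re R)) /= h; move: c0; rewrite h ltxx.
Qed.

Lemma LtP t p : 0 <= t -> Lset t p -> exists z w,
  [/\ p = Fmap a r t (z, w), nC z <= (1 + t) * r & nC w <= (1 + 2 * t) * r].
Proof.
move=> t0 [h1 h2]; have c0 : 0 < a + r * t by apply: Rpos.
exists ((p.2 : R[i]) / a%:C), (((p.1 : R[i]) - (1 - t)%:C * ((p.2 : R[i]) / a%:C) ^+ 2) / (a + r * t)%:C).
split.
- case: p {h1 h2} => u v; rewrite FmapE /=; congr pair.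
    field; apply/andP; split; [by move: (cC0 t0); rewrite rmorphD rmorphM | exact: aC0].
  by rewrite mulrC divfK // aC0.
- by rewrite nC_div // ler_pdivrMr // mulrC.
- by rewrite nC_div // ler_pdivrMr // [X in _ <= X]mulrC.
Qed.

Lemma Fmap_L t z w : 0 <= t -> nC z <= (1 + t) * r -> nC w <= (1 + 2 * t) * r ->
  Lset t (Fmap a r t (z, w)).
Proof.
move=> t0 hz hw; have c0 : 0 < a + r * t by apply: Rpos.
rewrite /Lset /=.
have -> : a%:C * z / a%:C = z by field; exact: aC0.
have -> : (1 - t)%:C * z ^+ 2 + (a + r * t)%:C * w - (1 - t)%:C * z ^+ 2 = (a + r * t)%:C * w by ring.
rewrite !nCM !nCRp ?(ltW c0) ?(ltW a0) //; split.
  by rewrite ler_wpM2l // ltW.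
by rewrite ler_wpM2l // ltW.
Qed.

Lemma Omega_L t p : 0 <= t -> Omega a r t p -> Lset t p.
Proof.
move=> t0 [[z w] /DeltaE [hz hw] <-]; apply: Fmap_L => //; exact: ltW.
Qed.

Lemma closE t p : 0 <= t -> t <= 1 -> closure (Omega a r t) p -> Lset t p.
Proof.
move=> t0 t1 cp; have c0 : 0 < a + r * t by apply: Rpos.
have key : forall e, 0 < e -> e <= 1 -> exists z w,
    [/\ nC z < (1 + t) * r, nC w < (1 + 2 * t) * r,
        nC ((p.1 : R[i]) - ((1 - t)%:C * z ^+ 2 + (a + r * t)%:C * w)) < a * e &
        nC ((p.2 : R[i]) - a%:C * z) < a * e].
  move=> e e0 e1; have ae : 0 < a * e by rewrite mulr_gt0.
  have [q [[[z w] /DeltaE [hz hw] <-] [h1 h2]]] := cp _ (nbhsC2' p ae).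
  by exists z, w.
split.
- apply: (@lim_le _ 1 _ _ a) => //; first exact: ltW.
  move=> e e0 e1.
  have [z [w [hz hw h1 h2]]] := key e e0 e1.
  have -> : (p.2 : R[i]) = a%:C * z + ((p.2 : R[i]) - a%:C * z) by rewrite addrC subrK.
  apply: le_trans (nCD _ _) _; rewrite nCM nCRp ?(ltW a0) //.
  have : a * nC z <= a * ((1 + t) * r) by rewrite ler_wpM2l ?(ltW a0) ?(ltW hz).
  clear a1; move: h2; rewrite (mulrC e); lra.
- have A0 : 0 <= (1 + t) * r by rewrite mulr_ge0 ?ltW // ltr_wpDr.
  apply: (@lim_le _ 1 _ _ (a + 2 * ((1 + t) * r) + 1)) => //.
    apply: addr_ge0; [apply: addr_ge0; [exact: ltW | exact: mulr_ge0] | exact: ler01].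
  move=> e e0 e1.
  have [z [w [hz hw h1 h2]]] := key e e0 e1.
  move: h1 h2; case: p {cp key} => u v /= h1 h2.
  set M := (v - a%:C * z) / a%:C.
  have -> : u - (1 - t)%:C * (v / a%:C) ^+ 2 =
    ((a + r * t)%:C * w + (u - ((1 - t)%:C * z ^+ 2 + (a + r * t)%:C * w))) -
    (1 - t)%:C * (2%:C * z * M + M ^+ 2).
    by rewrite /M; field; exact: aC0.
  apply: le_trans (nCBD _ _) _.
  apply: le_trans (lerD (nCD _ _) (lexx _)) _.
  have hM : nC M <= e.
    by rewrite /M nC_div // ler_pdivrMr // [e * a]mulrC; exact: ltW.
  have hin : nC (2%:C * z * M + M ^+ 2) <= 2 * nC z * nC M + nC M ^+ 2.
    by apply: le_trans (nCD _ _) _; rewrite !nCM nCRp // -expr2.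
  rewrite (nCM ((1 - t)%:C)) nCRp ?subr_ge0 // nCM nCRp ?(ltW c0) //.
  apply: le_trans (R5 t0 t1 e0 e1 (ltW hw) (ltW h1) (nC_ge0 z) (ltW hz) (nC_ge0 M) hM (ltW c0)).
  rewrite lerD2l ler_wpM2l // subr_ge0 //.
Qed.

Lemma capL t p : 0 <= t -> t < 1 ->
  (forall s, t < s <= 1 -> Omega a r s p) -> Lset t p.
Proof.
move=> t0 t1 H; have d0 : 0 < 1 - t by rewrite subr_gt0.
have key : forall e, 0 < e -> e <= 1 - t -> exists z w,
   [/\ p = Fmap a r (t + e) (z, w), nC z < (1 + (t + e)) * r & nC w < (1 + 2 * (t + e)) * r].
  move=> e e0 e1.
  have hs : t < t + e <= 1 by apply/andP; split; lra.
  have [[z w] /DeltaE [hz hw] hp] := H _ hs.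
  by exists z, w.
split.
- apply: (@lim_le _ (1 - t) _ _ (a * r)) => //; first by rewrite mulr_ge0 // ltW.
  move=> e e0 e1; have [z [w [-> hz hw]]] := key e e0 e1.
  rewrite /= nCM nCRp ?(ltW a0) //.
  have : a * nC z <= a * ((1 + (t + e)) * r) by rewrite ler_wpM2l ?(ltW a0) ?(ltW hz).
  clear a1; lra.
- apply: (@lim_le _ (1 - t) _ _ (r * (2 * a + 5 * r) + 4 * r ^+ 2)) => //.
    have := mulr_ge0 (ltW a0) (ltW r0); have := mulr_ge0 (ltW r0) (ltW r0); clear a1; rewrite -expr2; lra.
  move=> e e0 e1; have [z [w [-> hz hw]]] := key e e0 e1.
  rewrite /=.
  have -> : a%:C * z / a%:C = z by field; exact: aC0.
  have -> : (1 - (t + e))%:C * z ^+ 2 + (a + r * (t + e))%:C * w - (1 - t)%:C * z ^+ 2 =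
     (a + r * (t + e))%:C * w - e%:C * z ^+ 2 by rewrite !rmorphB !rmorphD /=; ring.
  apply: le_trans (nCBD _ _) _.
  have te0 : 0 <= t + e by rewrite addr_ge0 // ltW.
  rewrite !nCM !nCRp ?(ltW e0) ?(ltW (Rpos a0 r0 te0)) // -expr2.
  apply: R6 => //; rewrite ?nC_ge0 ?(ltW hz) ?(ltW hw) //; lra.
Qed.

Lemma cupL t p : 0 < t -> t <= 1 -> Omega a r t p ->
  exists t', 0 <= t' < t /\ Omega a r t' p.
Proof.
move=> t0 t1 [[z w] /DeltaE [hz hw] <-].
have c0 : 0 < a + r * t by apply: Rpos => //; exact: ltW.
have z0 := nC_ge0 z; have w0 := nC_ge0 w.
have G0 : 0 < (a + r * t) * ((1 + 2 * t) * r - nC w) by rewrite mulr_gt0 // subr_gt0.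
have H0 : 0 < (1 + t) * r - nC z by rewrite subr_gt0.
have X0 : 0 <= nC z ^+ 2 + r * (2 * (a + r * t) + r * (1 + 2 * t)).
  apply: addr_ge0; first exact: exprn_ge0.
  apply: mulr_ge0; first exact: ltW.
  have := mulr_ge0 (ltW r0) (ltW t0); clear a1; lra.
have [d [d0 dt dX dY]] := exdelta t0 G0 H0 X0 (ltW r0).
have t'0 : 0 <= t - d by rewrite subr_ge0.
have c'0 : 0 < a + r * (t - d) by apply: Rpos.
exists (t - d); split; first by apply/andP; split => //; rewrite ltrBlDr ltrDl.
exists (z, ((a + r * t)%:C * w - d%:C * z ^+ 2) / (a + r * (t - d))%:C).
  apply/DeltaE; split.
    move: dY.
    clear a1; lra.
  rewrite nC_div // ltr_pdivrMr //.
  apply: le_lt_trans (nCBD _ _) _.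
  rewrite !nCM !nCRp ?(ltW d0) ?(ltW c0) // -expr2.
  exact: R7.
rewrite !FmapE; congr pair.
by field; move: (cC0 t'0); rewrite rmorphD rmorphM rmorphB.
Qed.

Lemma ballR2 (p q : R * R) (e : R) : ball p e q <-> (`|p.1 - q.1| < e /\ `|p.2 - q.2| < e).
Proof. by rewrite /ball /= /prod_ball -!ball_normE. Qed.

Definition gC (x : R * R) : Cplx R := ((x.1 +i* x.2)%C : R[i]).

Lemma gC_cont : continuous gC.
Proof.
move=> x B /nbhs_ballP [[er ei]] /= e0 hB.
move: e0; rewrite ltcE /= => /andP [/eqP ei0 er0]; subst ei.
apply/nbhs_ballP; exists (er / 2); first by rewrite /= divr_gt0.
move=> y /ballR2 [h1 h2]; apply: hB => /=.
rewrite -ball_normE /= ltC.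
apply: le_lt_trans (nC_pair _ _) _.
have := h1; have := h2; clear a1; lra.
Qed.

Definition Box (M : R) : set (Cplx R) := gC @` (`[- M, M] `*` `[- M, M]).

Lemma Box_compact M : compact (Box M).
Proof.
apply: continuous_compact; first exact: continuous_subspaceT gC_cont.
exact: compact_setX (@segment_compact R _ _) (@segment_compact R _ _).
Qed.

Lemma inBox M (x : R[i]) : nC x <= M -> Box M (x : Cplx R).
Proof.
move=> hx; exists (complex.Re x, complex.Im x); last by case: x {hx}.
split; rewrite /= in_itv /= -ler_norml.
  exact: le_trans (ReC x) hx.
exact: le_trans (ImC x) hx.
Qed.

Lemma compact_cl t : 0 <= t -> t <= 1 -> compact (closure (Omega a r t)).
Proof.
move=> t0 t1.
set M := ((1 + t) * r) ^+ 2 + (a + r * t) * ((1 + 2 * t) * r) + a * ((1 + t) * r).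
apply: (@subclosed_compact _ _ (Box M `*` Box M)); [exact: closed_closure | by apply: compact_setX; apply: Box_compact |].
move=> p /(closE t0 t1) /(LtP t0) [z [w [-> hz hw]]].
have c0 : 0 < a + r * t by apply: Rpos.
have z0 := nC_ge0 z; have w0 := nC_ge0 w.
have A0 : 0 <= (1 + t) * r by apply: le_trans hz.
have B0 : 0 <= (1 + 2 * t) * r by apply: le_trans hw.
have hz2 : nC z ^+ 2 <= ((1 + t) * r) ^+ 2 by rewrite lerXn2r.
have hcw : (a + r * t) * nC w <= (a + r * t) * ((1 + 2 * t) * r) by rewrite ler_wpM2l // ltW.
have haz : a * nC z <= a * ((1 + t) * r) by rewrite ler_wpM2l // ltW.
have h1t : (1 - t) * nC z ^+ 2 <= nC z ^+ 2 by rewrite ler_piMl ?exprn_ge0 // lerBlDr lerDl.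
have hcw0 : 0 <= (a + r * t) * ((1 + 2 * t) * r) by rewrite mulr_ge0 // ltW.
have haz0 : 0 <= a * ((1 + t) * r) by rewrite mulr_ge0 // ltW.
split; apply: inBox => /=.
  apply: le_trans (nCD _ _) _; rewrite !nCM !nCRp ?subr_ge0 ?(ltW c0) // -expr2.
  rewrite /M; clear a1; lra.
rewrite nCM nCRp ?(ltW a0) //.
have : 0 <= ((1 + t) * r) ^+ 2 by rewrite exprn_ge0.
rewrite /M; clear a1; lra.
Qed.
End Main.

Local Close Scope complex_scope.

Theorem mainTheorem7 (R : realType) (a r : R) (ha : 0 < a < 1) (hr : 0 < r) :
  (forall t s : R, 0 <= t -> t < s -> s <= 1 ->
     compactly_contained (Omega a r t) (Omega a r s)) /\
  (forall t : R, 0 < t <= 1 ->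
     Omega a r t = \bigcup_(t' in [set t' : R | 0 <= t' < t]) Omega a r t') /\
  (forall t : R, 0 <= t < 1 ->
     closure (Omega a r t) = \bigcap_(s in [set s : R | t < s <= 1]) Omega a r s).
Proof.
case/andP: ha => a0 a1.
have clsub : forall t s : R, 0 <= t -> t < s -> s <= 1 -> closure (Omega a r t) `<=` Omega a r s.
  move=> t s t0 ts s1 p cp.
  have t1 : t <= 1 by apply: le_trans (ltW ts) s1.
  have [z [w [-> hz hw]]] := LtP a0 hr t0 (closE a0 hr t0 t1 cp).
  exact: OmegaA.
split; [|split].
- move=> t s t0 ts s1; split; last exact: clsub.
  apply: compact_cl => //; exact: le_trans (ltW ts) s1.
- move=> t /andP [t0 t1]; apply/seteqP; split.
    move=> p hp; have [t' [ht' hp']] := cupL a0 hr t0 t1 hp.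
    by exists t'.
  move=> p [t' /andP [t'0 t't] hp].
  have [z [w [-> hz hw]]] := LtP a0 hr t'0 (Omega_L a0 hr t'0 hp).
  exact: OmegaA.
- move=> t /andP [t0 t1]; apply/seteqP; split.
    by move=> p cp s /andP [ts s1]; apply: clsub cp.
  move=> p hp.
  have [z [w [-> hz hw]]] := LtP a0 hr t0 (capL a0 hr t0 t1 (fun s hs => hp s hs)).
  apply: closD => //; exact: ltW.
Qed.
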